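(* If $X$ is a cohesive almost zero-dimensional space and $K\subset X$ is $\sigma$-compact, then $X\setminus K$ is cohesive.
   Context: All spaces are separable and metrizable. A subset $A$ of $X$ is a C-set in $X$ if it is an intersection of clopen subsets of $X$. $X$ is almost zero-dimensional if every point has a neighborhood basis consisting of C-sets in $X$. $X$ is cohesive if every point $x\in X$ has a neighborhood which contains no non-empty clopen subset of $X$. *)

(* Defs.v *)
From Stdlib Require Import Reals List.
Open Scope R_scope.

(* A separable metric space (every separable metrizable space carries such a
   compatible metric; all notions below depend only on the topology). *)
Record SepMetricSpace := {
  carrier :> Type;
  dist : carrier -> carrier -> R;
  dist_nonneg : forall x y, 0 <= dist x y;
  dist_eq0 : forall x y, dist x y = 0 <-> x = y;
  dist_sym : forall x y, dist x y = dist y x;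
  dist_tri : forall x y z, dist x z <= dist x y + dist y z;
  separable : exists s : nat -> carrier,
      forall x eps, 0 < eps -> exists n, dist x (s n) < eps
}.

Section Topo.
Variable X : SepMetricSpace.

Definition set := X -> Prop.
Definition subset (A B : set) : Prop := forall x, A x -> B x.
Definition whole : set := fun _ => True.

(* All notions are relative to a subspace A of X with the induced topology. *)
Definition open_in (A U : set) : Prop :=
  subset U A /\
  forall x, U x -> exists eps, 0 < eps /\
    forall y, A y -> dist X x y < eps -> U y.

Definition closed_in (A F : set) : Prop :=
  subset F A /\ open_in A (fun x => A x /\ ~ F x).

Definition clopen_in (A U : set) : Prop := open_in A U /\ closed_in A U.

(* C-set in A: an intersection of (a family of) clopen subsets of A
   (the empty intersection being A itself). *)
Definition Cset_in (A C : set) : Prop :=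
  exists Fam : set -> Prop,
    (forall U, Fam U -> clopen_in A U) /\
    (forall x, C x <-> (A x /\ forall U, Fam U -> U x)).

Definition nbhd_in (A N : set) (x : X) : Prop :=
  subset N A /\ exists U, open_in A U /\ U x /\ subset U N.

Definition almost_zero_dim_in (A : set) : Prop :=
  forall x, A x -> forall U, nbhd_in A U x ->
    exists N, Cset_in A N /\ nbhd_in A N x /\ subset N U.

Definition cohesive_in (A : set) : Prop :=
  forall x, A x -> exists N, nbhd_in A N x /\
    forall C, clopen_in A C -> subset C N -> forall y, ~ C y.

Definition compact (K : set) : Prop :=
  forall Fam : set -> Prop,
    (forall U, Fam U -> open_in whole U) ->
    (forall x, K x -> exists U, Fam U /\ U x) ->
    exists l : list set, (forall U, In U l -> Fam U) /\
      (forall x, K x -> exists U, In U l /\ U x).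

Definition sigma_compact (K : set) : Prop :=
  exists Ks : nat -> set, (forall n, compact (Ks n)) /\
    (forall x, K x <-> exists n, Ks n x).

End Topo.

(* Main.v *)
Require Import Defs.
From Stdlib Require Import Reals List Lra Classical ClassicalEpsilon Cantor Lia.
Open Scope R_scope.

Lemma open_ext (X : SepMetricSpace) (A U V : set X) :
  (forall x, U x <-> V x) -> open_in X A U -> open_in X A V.
Proof.
  intros H [Hs Ho]. split.
  - intros x Hx. apply Hs, H, Hx.
  - intros x Hx. destruct (Ho x (proj2 (H x) Hx)) as [e [He He2]].
    exists e. split; auto. intros y Hy Hd. apply H. auto.
Qed.

Lemma open_whole (X : SepMetricSpace) (U : set X) :
  (forall x, U x -> exists e, 0 < e /\ forall y, Defs.dist X x y < e -> U y) ->
  open_in X (whole X) U.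
Proof.
  intros H. split. intros x _; exact I.
  intros x Hx. destruct (H x Hx) as [e [He H2]]. exists e; split; auto.
Qed.

Lemma open_whole_elim (X : SepMetricSpace) (U : set X) :
  open_in X (whole X) U -> forall x, U x -> exists e, 0 < e /\ forall y, Defs.dist X x y < e -> U y.
Proof.
  intros [_ H] x Hx. destruct (H x Hx) as [e [He H2]]. exists e; split; auto.
  intros y; apply H2; exact I.
Qed.

Lemma clopen_intro (X : SepMetricSpace) (U : set X) :
  open_in X (whole X) U -> open_in X (whole X) (fun y => ~ U y) -> clopen_in X (whole X) U.
Proof.
  intros H1 H2. split; auto. split. intros x _; exact I.
  apply (open_ext _ _ _ _ (fun x => conj (fun h => conj I h) (fun h => proj2 h)) H2).
Qed.

Lemma clopen_open (X : SepMetricSpace) (U : set X) :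
  clopen_in X (whole X) U -> open_in X (whole X) U.
Proof. intros [H _]; exact H. Qed.

Lemma clopen_compl (X : SepMetricSpace) (U : set X) :
  clopen_in X (whole X) U -> open_in X (whole X) (fun y => ~ U y).
Proof.
  intros [_ [_ H]]. apply (open_ext _ _ _ _ (fun x => conj (fun h => proj2 h) (fun h => conj I h)) H).
Qed.

Lemma dist_refl (X : SepMetricSpace) (x : X) : Defs.dist X x x = 0.
Proof. apply Defs.dist_eq0. reflexivity. Qed.

Lemma list_min (X : SepMetricSpace) (A : Type) (l : list A) (P : A -> X -> Prop) (z : X) :
  (forall a, In a l -> exists e, 0 < e /\ forall y, Defs.dist X z y < e -> P a y) ->
  exists e, 0 < e /\ forall a y, In a l -> Defs.dist X z y < e -> P a y.
Proof.
  induction l as [|a l IH]; intros H.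
  - exists 1; split; [lra|]. intros a y [].
  - destruct (H a (or_introl eq_refl)) as [e1 [He1 H1]].
    destruct IH as [e2 [He2 H2]]. { intros b Hb. apply H. right; exact Hb. }
    exists (Rmin e1 e2). split. { apply Rmin_glb_lt; auto. }
    intros b y [<-|Hb] Hd.
    + apply H1. eapply Rlt_le_trans; [exact Hd| apply Rmin_l].
    + apply H2; auto. eapply Rlt_le_trans; [exact Hd| apply Rmin_r].
Qed.

Lemma union_list_clopen (X : SepMetricSpace) (P : set X -> Prop) (l : list (set X)) :
  (forall V, In V l -> P V -> clopen_in X (whole X) V) ->
  clopen_in X (whole X) (fun x => exists V, In V l /\ P V /\ V x).
Proof.
  intros H. apply clopen_intro.
  - apply open_whole. intros x [V [HV [HP Vx]]].
    destruct (open_whole_elim _ _ (clopen_open _ _ (H V HV HP)) x Vx) as [e [He H2]].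
    exists e; split; auto. intros y Hy. exists V; auto.
  - apply open_whole. intros x Hx.
    destruct (list_min X (set X) l (fun V y => P V -> ~ V y) x) as [e [He H2]].
    + intros V HV. destruct (classic (P V)) as [HP|HP].
      * assert (nV : ~ V x) by (intro; apply Hx; exists V; auto).
        destruct (open_whole_elim _ _ (clopen_compl _ _ (H V HV HP)) x nV) as [e [He H2]].
        exists e; split; auto.
      * exists 1; split; [lra|]. intros y _ HP'. contradiction.
    + exists e; split; auto. intros y Hy [V [HV [HP Vy]]]. exact (H2 V y HV Hy HP Vy).
Qed.
Lemma Cset_ext (X : SepMetricSpace) (A B : set X) :
  (forall x, A x <-> B x) -> Cset_in X (whole X) A -> Cset_in X (whole X) B.
Proof.
  intros H [Fam [H1 H2]]. exists Fam. split; auto.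
  intros x. rewrite <- H. apply H2.
Qed.

Lemma clopen_empty (X : SepMetricSpace) : clopen_in X (whole X) (fun _ => False).
Proof.
  apply clopen_intro; apply open_whole.
  - intros x [].
  - intros x _. exists 1; split; [lra|]. intros y _ [].
Qed.

Lemma clopen_union (X : SepMetricSpace) (U V : set X) :
  clopen_in X (whole X) U -> clopen_in X (whole X) V ->
  clopen_in X (whole X) (fun x => U x \/ V x).
Proof.
  intros HU HV. apply clopen_intro; apply open_whole.
  - intros x [Ux|Vx].
    + destruct (open_whole_elim _ _ (clopen_open _ _ HU) x Ux) as [e [He H]].
      exists e; split; auto.
    + destruct (open_whole_elim _ _ (clopen_open _ _ HV) x Vx) as [e [He H]].
      exists e; split; auto.
  - intros x Hx.
    destruct (open_whole_elim _ _ (clopen_compl _ _ HU) x (fun h => Hx (or_introl h))) as [e1 [He1 H1]].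
    destruct (open_whole_elim _ _ (clopen_compl _ _ HV) x (fun h => Hx (or_intror h))) as [e2 [He2 H2]].
    exists (Rmin e1 e2). split. { apply Rmin_glb_lt; auto. }
    intros y Hy [Uy|Vy].
    + apply (H1 y); auto. eapply Rlt_le_trans; [exact Hy|apply Rmin_l].
    + apply (H2 y); auto. eapply Rlt_le_trans; [exact Hy|apply Rmin_r].
Qed.

Lemma clopen_ext (X : SepMetricSpace) (U V : set X) :
  (forall x, U x <-> V x) -> clopen_in X (whole X) U -> clopen_in X (whole X) V.
Proof.
  intros H HU. apply clopen_intro.
  - exact (open_ext _ _ _ _ H (clopen_open _ _ HU)).
  - refine (open_ext _ _ _ _ _ (clopen_compl _ _ HU)). intros x. rewrite (H x). tauto.
Qed.

Lemma Cset_empty (X : SepMetricSpace) : Cset_in X (whole X) (fun _ => False).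
Proof.
  exists (fun U => forall x, U x <-> False). split.
  - intros U HU. apply (clopen_ext X (fun _ => False)).
    + intros x. rewrite HU. tauto.
    + apply clopen_empty.
  - intros x. split; [intros []|]. intros [_ H].
    apply (H (fun _ => False)). tauto.
Qed.

Lemma Cset_union (X : SepMetricSpace) (A B : set X) :
  Cset_in X (whole X) A -> Cset_in X (whole X) B ->
  Cset_in X (whole X) (fun x => A x \/ B x).
Proof.
  intros [F1 [H1 E1]] [F2 [H2 E2]].
  exists (fun V => exists U1 U2, F1 U1 /\ F2 U2 /\ forall y, V y <-> U1 y \/ U2 y).
  split.
  - intros V [U1 [U2 [HU1 [HU2 HV]]]].
    apply (clopen_ext X (fun y => U1 y \/ U2 y)).
    + intros y; rewrite HV; tauto.
    + apply clopen_union; auto.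
  - intros x. split.
    + intros Hx. split; [exact I|]. intros V [U1 [U2 [HU1 [HU2 HV]]]]. apply HV.
      destruct Hx as [Ax|Bx].
      * left. apply (proj1 (E1 x) Ax). exact HU1.
      * right. apply (proj1 (E2 x) Bx). exact HU2.
    + intros [_ H]. destruct (classic (A x)) as [Ax|nA]; [left; exact Ax|].
      destruct (classic (B x)) as [Bx|nB]; [right; exact Bx|].
      exfalso.
      assert (exists U1, F1 U1 /\ ~ U1 x) as [U1 [HU1 nU1]].
      { apply NNPP. intro Hn. apply nA. apply E1. split; [exact I|].
        intros U HU. apply NNPP. intro. apply Hn. exists U; auto. }
      assert (exists U2, F2 U2 /\ ~ U2 x) as [U2 [HU2 nU2]].
      { apply NNPP. intro Hn. apply nB. apply E2. split; [exact I|].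
        intros U HU. apply NNPP. intro. apply Hn. exists U; auto. }
      assert (HV := H (fun y => U1 y \/ U2 y)).
      destruct HV as [h|h]; [|contradiction|contradiction].
      exists U1, U2. split; auto. split; auto. tauto.
Qed.

Lemma sep_compact (X : SepMetricSpace) (L Dc S : set X) :
  Defs.compact X L -> Cset_in X (whole X) S ->
  open_in X (whole X) (fun y => ~ Dc y) ->
  (forall z, L z -> Dc z -> ~ S z) ->
  exists G, clopen_in X (whole X) G /\ (forall z, L z -> Dc z -> G z) /\
    (forall z, G z -> ~ S z).
Proof.
  intros HL [Fam [HF EF]] HD Hdisj.
  set (P := fun V : set X => exists U, Fam U /\ forall y, V y <-> ~ U y).
  destruct (HL (fun V => P V \/ forall y, V y <-> ~ Dc y)) as [l [Hl Hcov]].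
  - intros V [[U [HU HV]]|HV].
    + refine (open_ext _ _ _ _ _ (clopen_compl _ _ (HF U HU))). intros y; rewrite HV; tauto.
    + refine (open_ext _ _ _ _ _ HD). intros y; rewrite HV; tauto.
  - intros x Lx. destruct (classic (Dc x)) as [Dx|nD].
    + assert (exists U, Fam U /\ ~ U x) as [U [HU nU]].
      { apply NNPP. intro Hn. apply (Hdisj x Lx Dx). apply EF. split; [exact I|].
        intros U HU. apply NNPP. intro. apply Hn. exists U; auto. }
      exists (fun y => ~ U y). split; auto. left. exists U. split; auto. tauto.
    + exists (fun y => ~ Dc y). split; auto. right; tauto.
  - exists (fun x => exists V, In V l /\ P V /\ V x). split; [|split].
    + apply union_list_clopen. intros V _ [U [HU HV]].
      apply (clopen_ext X (fun y => ~ U y)). { intros y; rewrite HV; tauto. }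
      apply clopen_intro.
      * apply clopen_compl, HF, HU.
      * refine (open_ext _ _ _ _ _ (clopen_open _ _ (HF U HU))). intros y; tauto.
    + intros z Lz Dz. destruct (Hcov z Lz) as [V [HV Vz]].
      destruct (Hl V HV) as [HP|HV2].
      * exists V; auto.
      * exfalso. apply (proj1 (HV2 z) Vz Dz).
    + intros z [V [_ [[U [HU HV]] Vz]]] Sz.
      apply (proj1 (HV z) Vz). apply (proj1 (EF z) Sz). exact HU.
Qed.

Lemma not_cl_ball (X : SepMetricSpace) (W : set X) (x : X) :
  ~ (forall e, 0 < e -> exists w, W w /\ Defs.dist X x w < e) ->
  exists e, 0 < e /\ forall w, W w -> e <= Defs.dist X x w.
Proof.
  intros H. apply NNPP. intros Hn. apply H. intros e He.
  apply NNPP. intros Hn2. apply Hn. exists e. split; auto.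
  intros w Ww. apply Rnot_lt_le. intros Hl. apply Hn2. exists w; auto.
Qed.

Lemma sep_main (X : SepMetricSpace) (Ks : nat -> set X) (W : set X) (p : X) (delta : R) :
  (forall n, Defs.compact X (Ks n)) ->
  almost_zero_dim_in X (whole X) ->
  open_in X (whole X) W ->
  0 < delta -> (forall y, Defs.dist X p y < delta -> ~ W y) ->
  (forall z, (forall e, 0 < e -> exists w, W w /\ Defs.dist X z w < e) -> ~ W z ->
     exists n, Ks n z) ->
  exists F, clopen_in X (whole X) F /\ F p /\ forall z, F z -> ~ W z.
Proof.
  intros HKc HA HW Hdelta Hp HB.
  set (clW := fun z => forall e, 0 < e -> exists w, W w /\ Defs.dist X z w < e).
  assert (WclW : forall z, W z -> clW z).
  { intros z Wz e He. exists z. split; auto. rewrite dist_refl; exact He. }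
  assert (HclO : open_in X (whole X) (fun y => ~ clW y)).
  { apply open_whole. intros x Hx. destruct (not_cl_ball X W x Hx) as [e [He H]].
    exists (e/2). split; [lra|]. intros y Hy Hcl.
    destruct (Hcl (e/2)) as [w [Ww Hw]]; [lra|].
    assert (H1 := H w Ww). assert (H2 := Defs.dist_tri X x y w). lra. }
  destruct (separable X) as [s Hs].
  set (good := fun n m (M : set X) => Cset_in X (whole X) M /\ (forall z, M z -> ~ clW z) /\
     (forall z, Defs.dist X (s n) z < / (INR m + 1) -> M z)).
  set (spec := fun n m (M : set X) => Cset_in X (whole X) M /\ (forall z, M z -> ~ clW z) /\
     ((exists M', good n m M') -> forall z, Defs.dist X (s n) z < / (INR m + 1) -> M z)).
  set (Mk := fun k => epsilon (inhabits (fun _ : X => False))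
                 (spec (fst (Cantor.of_nat k)) (snd (Cantor.of_nat k)))).
  assert (HMk : forall k, spec (fst (Cantor.of_nat k)) (snd (Cantor.of_nat k)) (Mk k)).
  { intros k. unfold Mk. apply epsilon_spec.
    destruct (classic (exists M', good (fst (Cantor.of_nat k)) (snd (Cantor.of_nat k)) M'))
      as [[M' HM']|Hn].
    - exists M'. destruct HM' as [a [b c]]. split; [exact a|]. split; [exact b|]. intros _; exact c.
    - exists (fun _ => False). split; [apply Cset_empty|]. split; [intros z []|].
      intros Hc; contradiction. }
  assert (Hcover : forall z, ~ clW z -> exists k rho, 0 < rho /\
             forall y, Defs.dist X z y < rho -> Mk k y).
  { intros z Hz.
    destruct (HA z I (fun y => ~ clW y)) as [N [HN [[_ [V [HV [Vz VN]]]] HNs]]].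
    { split. intros y _; exact I. exists (fun y => ~ clW y). split; auto.
      split; auto. intros y h; exact h. }
    destruct (open_whole_elim _ _ HV z Vz) as [eps [Heps HVe]].
    destruct (archimed_cor1 (eps/2)) as [m [Hm Hm0]]; [lra|].
    assert (Hr : 0 < / (INR m + 1)).
    { apply Rinv_0_lt_compat. assert (0 <= INR m) by apply pos_INR. lra. }
    assert (Hr2 : / (INR m + 1) < eps / 2).
    { eapply Rle_lt_trans; [|exact Hm]. apply Rinv_le_contravar.
      apply lt_0_INR; lia. lra. }
    destruct (Hs z (/ (INR m + 1)) Hr) as [n Hn].
    assert (Hg : good n m N).
    { split; auto. split. { intros y Ny. apply HNs. exact Ny. }
      intros y Hy. apply VN. apply HVe.
      assert (H1 := Defs.dist_tri X z (s n) y). lra. }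
    exists (Cantor.to_nat (n, m)).
    destruct (HMk (Cantor.to_nat (n, m))) as [_ [_ H3]].
    rewrite Cantor.cancel_of_to in H3. simpl in H3.
    exists (/ (INR m + 1) - Defs.dist X (s n) z). split.
    { rewrite Defs.dist_sym. lra. }
    intros y Hy. apply H3. { exists N; exact Hg. }
    assert (H1 := Defs.dist_tri X (s n) z y). lra. }
  assert (Hpcl : ~ clW p).
  { intros Hc. destruct (Hc delta Hdelta) as [w [Ww Hw]]. apply (Hp w Hw Ww). }
  destruct (Hcover p Hpcl) as [k0 [rho0 [Hrho0 Hk0]]].
  assert (Mk0p : Mk k0 p). { apply Hk0. rewrite dist_refl; exact Hrho0. }
  set (S := fun j z => Mk k0 z \/ exists k, (k <= j)%nat /\ Mk k z).
  assert (HMC : forall k, Cset_in X (whole X) (Mk k)).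
  { intros k. destruct (HMk k) as [h _]; exact h. }
  assert (HS : forall j, Cset_in X (whole X) (S j)).
  { induction j as [|j IH].
    - apply (Cset_ext X (fun z => Mk k0 z \/ Mk 0%nat z)).
      + intros z. unfold S. split.
        * intros [h|h]; [left; exact h|right; exists 0%nat; split; auto].
        * intros [h|[k [Hk h]]]; [left; exact h|right]. assert (k = 0%nat) by lia. subst; exact h.
      + apply Cset_union; auto.
    - apply (Cset_ext X (fun z => S j z \/ Mk (Datatypes.S j) z)).
      + intros z. unfold S. split.
        * intros [[h|[k [Hk h]]]|h]; [left; exact h|right; exists k; split; [lia|exact h]|].
          right; exists (Datatypes.S j); split; auto.
        * intros [h|[k [Hk h]]]; [left; left; exact h|].
          destruct (Nat.eq_dec k (Datatypes.S j)) as [->|Hne]; [right; exact h|].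
          left; right; exists k; split; [lia|exact h].
      + apply Cset_union; auto. }
  assert (HSd : forall j z, S j z -> ~ clW z).
  { intros j z [h|[k [_ h]]].
    - destruct (HMk k0) as [_ [h2 _]]; eauto.
    - destruct (HMk k) as [_ [h2 _]]; eauto. }
  set (G := fun j => epsilon (inhabits (fun _ : X => False))
      (fun G => clopen_in X (whole X) G /\ (forall z, Ks j z -> clW z -> G z) /\
                forall z, G z -> ~ S j z)).
  assert (HG : forall j, clopen_in X (whole X) (G j) /\ (forall z, Ks j z -> clW z -> G j z) /\
                forall z, G j z -> ~ S j z).
  { intros j. unfold G. apply epsilon_spec.
    apply sep_compact; auto. intros z _ h1 h2. exact (HSd j z h2 h1). }
  exists (fun z => ~ W z /\ forall j, ~ G j z). split; [|split].
  - apply clopen_intro.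
    + apply open_whole. intros z [nW nG].
      assert (nclW : ~ clW z).
      { intros Hc. destruct (HB z Hc nW) as [n Hn].
        apply (nG n). apply (proj1 (proj2 (HG n))); auto. }
      destruct (Hcover z nclW) as [k [rho [Hrho Hk]]].
      destruct (list_min X nat (seq 0 k) (fun j y => ~ G j y) z) as [e [He He2]].
      { intros j Hj. destruct (open_whole_elim _ _ (clopen_compl _ _ (proj1 (HG j))) z (nG j))
          as [e [He He2]]. exists e; auto. }
      exists (Rmin rho e). split. { apply Rmin_glb_lt; auto. }
      intros y Hy.
      assert (Hy1 : Defs.dist X z y < rho) by (eapply Rlt_le_trans; [exact Hy|apply Rmin_l]).
      assert (Hy2 : Defs.dist X z y < e) by (eapply Rlt_le_trans; [exact Hy|apply Rmin_r]).
      assert (My := Hk y Hy1).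
      split.
      * intros Wy. destruct (HMk k) as [_ [h _]]. apply (h y My). apply WclW; exact Wy.
      * intros j. destruct (Nat.lt_ge_cases j k) as [Hjk|Hjk].
        -- apply He2; auto. apply in_seq. lia.
        -- intros Gy. apply (proj2 (proj2 (HG j)) y Gy). right. exists k; auto.
    + apply open_whole. intros z Hz.
      destruct (classic (W z)) as [Wz|nW].
      * destruct (open_whole_elim _ _ HW z Wz) as [e [He He2]].
        exists e; split; auto. intros y Hy [h _]. apply h, He2, Hy.
      * assert (exists j, G j z) as [j Gj].
        { apply NNPP. intros Hn. apply Hz. split; auto. intros j Gj. apply Hn; exists j; auto. }
        destruct (open_whole_elim _ _ (clopen_open _ _ (proj1 (HG j))) z Gj) as [e [He He2]].
        exists e; split; auto. intros y Hy [_ h]. apply (h j), He2, Hy.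
  - split.
    + apply Hp. rewrite dist_refl; exact Hdelta.
    + intros j Gj. apply (proj2 (proj2 (HG j)) p Gj). left; exact Mk0p.
  - intros z [h _]; exact h.
Qed.

Theorem theorem4p10 (X : SepMetricSpace) (K : set X) :
  cohesive_in X (whole X) ->
  almost_zero_dim_in X (whole X) ->
  sigma_compact X K ->
  cohesive_in X (fun x => ~ K x).
Proof.
  intros Hcoh HA [Ks [HKc HKiff]] x Hx.
  destruct (Hcoh x I) as [N [[_ [U [HU [Ux UN]]]] Hno]].
  destruct (open_whole_elim _ _ HU x Ux) as [r [Hr HUr]].
  exists (fun y => ~ K y /\ Defs.dist X x y < r / 2). split.
  - split. { intros y [h _]; exact h. }
    exists (fun y => ~ K y /\ Defs.dist X x y < r / 2). split; [|split].
    + split. { intros y [h _]; exact h. }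
      intros y [Ky Hy]. exists (r/2 - Defs.dist X x y). split; [lra|].
      intros z Kz Hz. split; auto. assert (H1 := Defs.dist_tri X x y z). lra.
    + split; auto. rewrite dist_refl; lra.
    + intros y h; exact h.
  - intros C [[_ HCo] [_ [_ HCc]]] HCs y Cy.
    set (A2 := fun z => (~ K z /\ ~ C z) \/ ~ (Defs.dist X x z < r)).
    set (W := fun z => exists b rho, A2 b /\ 0 < rho /\ (forall a, C a -> rho <= Defs.dist X b a)
                          /\ Defs.dist X b z < rho / 2).
    assert (HWo : open_in X (whole X) W).
    { apply open_whole. intros z [b [rho [Hb [Hrho [Hba Hbz]]]]].
      exists (rho/2 - Defs.dist X b z). split; [lra|]. intros w Hw.
      exists b, rho. split; auto. split; auto. split; auto.
      assert (H1 := Defs.dist_tri X b z w). lra. }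
    assert (Hii : forall a, C a -> exists ra, 0 < ra /\ forall w, A2 w -> ra <= Defs.dist X a w).
    { intros a Ca. destruct (HCs a Ca) as [Ka Hxa].
      destruct (HCo a Ca) as [e [He He2]].
      exists (Rmin e (r/2)). split. { apply Rmin_glb_lt; lra. }
      intros w [[Kw Cw]|Hw].
      - apply Rnot_lt_le. intros Hl. apply Cw. apply He2; auto.
        eapply Rlt_le_trans; [exact Hl|apply Rmin_l].
      - assert (H1 := Defs.dist_tri X x a w). assert (Rmin e (r/2) <= r/2) by apply Rmin_r.
        apply Rnot_lt_le in Hw. lra. }
    assert (Hii2 : forall a, C a -> exists ra, 0 < ra /\ forall z, Defs.dist X a z < ra -> ~ W z).
    { intros a Ca. destruct (Hii a Ca) as [ra [Hra Hra2]].
      exists (ra/2). split; [lra|]. intros z Hz [b [rho [Hb [Hrho [Hba Hbz]]]]].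
      assert (H1 := Hra2 b Hb). assert (H2 := Hba a Ca).
      assert (H3 := Defs.dist_tri X a z b). rewrite (Defs.dist_sym X z b) in H3.
      rewrite (Defs.dist_sym X b a) in H2. lra. }
    assert (Hiii : forall b, A2 b -> W b).
    { intros b Hb. destruct Hb as [[Kb Cb]|Hb].
      - destruct (HCc b (conj Kb Cb)) as [e [He He2]].
        exists b, e. split; [left; auto|]. split; auto. split.
        + intros a Ca. apply Rnot_lt_le. intros Hl.
          destruct (He2 a (proj1 (HCs a Ca)) Hl) as [_ h]. contradiction.
        + rewrite dist_refl; lra.
      - exists b, (r/2). split; [right; auto|]. split; [lra|]. split.
        + intros a Ca. destruct (HCs a Ca) as [_ Hxa].
          assert (H1 := Defs.dist_tri X x a b). rewrite (Defs.dist_sym X a b) in H1.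
          apply Rnot_lt_le in Hb. lra.
        + rewrite dist_refl; lra. }
    destruct (Hii2 y Cy) as [ry [Hry Hry2]].
    destruct (sep_main X Ks W y ry HKc HA HWo Hry Hry2) as [F [HF [Fy FW]]].
    + intros z Hcl nW. apply HKiff. apply NNPP. intros nK.
      destruct (classic (C z)) as [Cz|nC].
      * destruct (Hii2 z Cz) as [rz [Hrz Hrz2]].
        destruct (Hcl rz Hrz) as [w [Ww Hw]]. exact (Hrz2 w Hw Ww).
      * apply nW, Hiii. left; auto.
    + apply (Hno F HF) with y; auto.
      intros z Fz. apply UN. apply HUr.
      apply NNPP. intros Hn. apply (FW z Fz). apply Hiii. right; exact Hn.
Qed.
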